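(* Let $m$ be a real number such that $\frac m2\notin\{0,-1,-2,\dots\}$ and let $d(z,n)=\frac{z^n}{\frac m2(\frac m2+1)\cdots(\frac m2+n-1)}=\frac{z^n\Gamma(\frac m2)}{\Gamma(\frac m2+n)}$ for $z\ge0$, $n\in\mathbb N$ (with $d(z,0)=1$). Then $\mathcal K^\alpha\rightarrow^dK^\alpha$ for each $\alpha\in\{+,-,0\}$. As a consequence, every element of the algebra generated by $\mathcal K^+,\mathcal K^-,\mathcal K^0$ is dual, with duality function $d$, to the element of the algebra generated by $K^+,K^-,K^0$ obtained by replacing each operator $\mathcal K^\alpha$ by $K^\alpha$ and reversing the order of products.
   Context: $\mathbb N=\{0,1,2,\dots\}$. On smooth functions $f:[0,\infty)\to\mathbb R$: $\mathcal K^+f(z)=zf(z)$, $\mathcal K^-f(z)=zf''(z)+\frac m2f'(z)$, $\mathcal K^0f(z)=zf'(z)+\frac m4f(z)$. On functions $f:\mathbb N\to\mathbb R$: $K^+f(n)=(\frac m2+n)f(n+1)$, $K^-f(n)=nf(n-1)$, $K^0f(n)=(\frac m4+n)f(n)$. Left/right actions: $(\mathcal K_ld)(z,n)=(\mathcal Kd(\cdot,n))(z)$, $(K_rd)(z,n)=(Kd(z,\cdot))(n)$; $\mathcal K\rightarrow^dK$ means $\mathcal K_ld=K_rd$. *)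

(* Defs.v *)
From Stdlib Require Import Reals List.
From Coquelicot Require Import Coquelicot.
Open Scope R_scope.

Fixpoint poch (a : R) (n : nat) : R :=
  match n with
  | O => 1
  | S k => poch a k * (a + INR k)
  end.

Definition dual_fun (m : R) (z : R) (n : nat) : R := z ^ n / poch (m / 2) n.

Definition Kc_plus (m : R) (f : R -> R) (z : R) : R := z * f z.
Definition Kc_minus (m : R) (f : R -> R) (z : R) : R :=
  z * Derive (Derive f) z + m / 2 * Derive f z.
Definition Kc_zero (m : R) (f : R -> R) (z : R) : R :=
  z * Derive f z + m / 4 * f z.

Definition Kd_plus (m : R) (f : nat -> R) (n : nat) : R := (m / 2 + INR n) * f (S n).
Definition Kd_minus (m : R) (f : nat -> R) (n : nat) : R :=
  INR n * f (Nat.pred n).   (* n = 0 gives 0 * f 0 = 0 *)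
Definition Kd_zero (m : R) (f : nat -> R) (n : nat) : R := (m / 4 + INR n) * f n.

Definition act_l (K : (R -> R) -> R -> R) (D : R -> nat -> R) (z : R) (n : nat) : R :=
  K (fun y => D y n) z.
Definition act_r (K : (nat -> R) -> nat -> R) (D : R -> nat -> R) (z : R) (n : nat) : R :=
  K (D z) n.

Definition dual_rel (K : (R -> R) -> R -> R) (K' : (nat -> R) -> nat -> R)
  (D : R -> nat -> R) : Prop :=
  forall (z : R) (n : nat), 0 <= z -> act_l K D z n = act_r K' D z n.

Inductive gen := Gplus | Gminus | Gzero.

Definition Kc (m : R) (a : gen) : (R -> R) -> R -> R :=
  match a with Gplus => Kc_plus m | Gminus => Kc_minus m | Gzero => Kc_zero m end.
Definition Kd (m : R) (a : gen) : (nat -> R) -> nat -> R :=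
  match a with Gplus => Kd_plus m | Gminus => Kd_minus m | Gzero => Kd_zero m end.

(* A word [a1; ...; ak] denotes the product K^{a1} K^{a2} ... K^{ak}
   (composition: ak is applied first). *)
Fixpoint Kc_word (m : R) (w : list gen) (f : R -> R) : R -> R :=
  match w with nil => f | a :: w' => Kc m a (Kc_word m w' f) end.
Fixpoint Kd_word (m : R) (w : list gen) (f : nat -> R) : nat -> R :=
  match w with nil => f | a :: w' => Kd m a (Kd_word m w' f) end.

(* An element of the algebra generated by the K^alpha: a finite real linear
   combination of words, sum_i c_i * (word w_i). *)
Definition alg_elt := list (R * list gen).

Fixpoint Kc_alg (m : R) (p : alg_elt) (f : R -> R) (z : R) : R :=
  match p with
  | nil => 0
  | (c, w) :: p' => c * Kc_word m w f z + Kc_alg m p' f z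
  end.

Fixpoint Kd_alg_rev (m : R) (p : alg_elt) (f : nat -> R) (n : nat) : R :=
  match p with
  | nil => 0
  | (c, w) :: p' => c * Kd_word m (rev w) f n + Kd_alg_rev m p' f n
  end.

(* Main.v *)
Require Import Defs.
From Stdlib Require Import Reals List Lra FunctionalExtensionality.
From Coquelicot Require Import Coquelicot.
Open Scope R_scope.

Lemma D_pow (n : nat) (c : R) :
  Derive (fun y => y ^ n / c) = fun y => INR n * y ^ (pred n) / c.
Proof.
  apply functional_extensionality; intro x.
  apply is_derive_unique. auto_derive. auto. unfold Rdiv; ring.
Qed.

Lemma poch_nz (m : R) (hm : forall k : nat, m / 2 <> - INR k) n : poch (m/2) n <> 0.
Proof.
  induction n; simpl. lra.
  apply Rmult_integral_contrapositive; split; auto.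
  intro H. apply (hm n). lra.
Qed.

Lemma base (m : R) (hm : forall k : nat, m / 2 <> - INR k) a :
  forall z n, act_l (Kc m a) (dual_fun m) z n = act_r (Kd m a) (dual_fun m) z n.
Proof.
  intros z n. unfold act_l, act_r, dual_fun.
  destruct a; simpl.
  - unfold Kc_plus, Kd_plus. simpl.
    assert (H1 := poch_nz m hm n).
    assert (H2 : m/2 + INR n <> 0) by (intro H; apply (hm n); lra).
    field. split; auto. intro H; apply H2; lra.
  - unfold Kc_minus, Kd_minus. rewrite D_pow.
    replace (fun y => INR n * y ^ pred n / poch (m/2) n) with
      (fun y => INR n / poch (m/2) n * (y ^ pred n / 1)) by
      (apply functional_extensionality; intro; field; apply (poch_nz m hm)).
    rewrite Derive_scal, D_pow.
    destruct n as [|n]. simpl. field.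
    simpl pred. assert (H1 := poch_nz m hm n).
    assert (H2 : m/2 + INR n <> 0) by (intro H; apply (hm n); lra).
    destruct n as [|k].
    + simpl. field. intro; apply H2; simpl; lra.
    + change (poch (m/2) (S (S k))) with (poch (m/2) (S k) * (m/2 + INR (S k))).
      simpl pred. rewrite (S_INR (S k)).
      set (p := poch (m/2) (S k)) in *. set (x := INR (S k)) in *.
      simpl pow. field. split; auto. intro; apply H2; lra.
  - unfold Kc_zero, Kd_zero. rewrite D_pow.
    assert (H1 := poch_nz m hm n).
    destruct n as [|n]. simpl. field; auto.
    simpl pred. simpl pow. rewrite S_INR. field. auto.
Qed.

Lemma Kc_scal m a c g z : Kc m a (fun y => c * g y) z = c * Kc m a g z.
Proof.
  destruct a; simpl; unfold Kc_plus, Kc_minus, Kc_zero.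
  - ring.
  - rewrite Derive_scal.
    replace (Derive (fun y => c * g y)) with (fun y => c * Derive g y)
      by (apply functional_extensionality; intro; now rewrite Derive_scal).
    rewrite Derive_scal. ring.
  - rewrite Derive_scal. ring.
Qed.

Lemma Kc_ext m a f g z : (forall y, f y = g y) -> Kc m a f z = Kc m a g z.
Proof. intro H. apply functional_extensionality in H. now subst. Qed.

Lemma comm m a (D : R -> nat -> R) v : forall n z,
  Kc m a (fun y => Kd_word m v (D y) n) z =
  Kd_word m v (fun k => Kc m a (fun y => D y k) z) n.
Proof.
  induction v as [|b v IH]; intros n z; simpl. reflexivity.
  destruct b; simpl; unfold Kd_plus, Kd_minus, Kd_zero.
  - rewrite Kc_scal, IH. reflexivity.
  - rewrite Kc_scal, IH. reflexivity.
  - rewrite Kc_scal, IH. reflexivity.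
Qed.

Lemma Kd_word_app m v1 v2 f n :
  Kd_word m (v1 ++ v2) f n = Kd_word m v1 (Kd_word m v2 f) n.
Proof.
  revert n; induction v1 as [|b v IH]; intros n; simpl. reflexivity.
  f_equal. apply functional_extensionality; intro; apply IH.
Qed.

Lemma word (m : R) (hm : forall k : nat, m / 2 <> - INR k) w :
  forall z n, Kc_word m w (fun y => dual_fun m y n) z = Kd_word m (rev w) (dual_fun m z) n.
Proof.
  induction w as [|a w IH]; intros z n; simpl. reflexivity.
  rewrite Kd_word_app.
  rewrite (Kc_ext m a _ (fun y => Kd_word m (rev w) (dual_fun m y) n)) by (intro; apply IH).
  rewrite comm. f_equal. apply functional_extensionality; intro k.
  simpl. assert (H := base m hm a z k). unfold act_l, act_r in H. rewrite H.
  destruct a; reflexivity.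
Qed.

Theorem proposition5p2 (m : R)
  (hm : forall k : nat, m / 2 <> - INR k) :
  dual_rel (Kc_plus m) (Kd_plus m) (dual_fun m) /\
  dual_rel (Kc_minus m) (Kd_minus m) (dual_fun m) /\
  dual_rel (Kc_zero m) (Kd_zero m) (dual_fun m) /\
  (forall p : alg_elt, dual_rel (Kc_alg m p) (Kd_alg_rev m p) (dual_fun m)).
Proof.
  split; [|split; [|split]].
  - intros z n _. exact (base m hm Gplus z n).
  - intros z n _. exact (base m hm Gminus z n).
  - intros z n _. exact (base m hm Gzero z n).
  - intros p z n _. unfold act_l, act_r.
    induction p as [|[c w] p IH]; simpl. reflexivity.
    rewrite IH, word by exact hm. reflexivity.
Qed.
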